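(* Let $G$ be a directed graph with vertices $s,t$ and $k\ge1$. The function $\hat d_{\mathrm{sum}}:U^k_{\mathrm{lr}}\to\mathbb N$, $\hat d_{\mathrm{sum}}(C)=\sum_{e\in E_{\mathrm{shr}}(C)}\binom{\mu_e(C)}{2}$, is submodular on the lattice $L^*$, i.e. $\hat d_{\mathrm{sum}}(C_1\vee C_2)+\hat d_{\mathrm{sum}}(C_1\wedge C_2)\le\hat d_{\mathrm{sum}}(C_1)+\hat d_{\mathrm{sum}}(C_2)$ for all $C_1,C_2\in L^*$.
   Context: An $s$-$t$ cut of a directed graph $G$ is a set $X\subseteq E(G)$ such that removing $X$ leaves no directed $s$-$t$ path; $\Gamma_G(s,t)$ is the set of $s$-$t$ cuts of minimum cardinality. Fix a maximum-size collection $\mathcal P$ of pairwise edge-disjoint directed $s$-$t$ paths (each minimum $s$-$t$ cut contains exactly one edge of each path in $\mathcal P$). For $X,Y\in\Gamma_G(s,t)$, $S_{\min}(X\cup Y)$ (resp. $S_{\max}(X\cup Y)$) consists, for each $p\in\mathcal P$, of the edge of $(X\cup Y)\cap p$ occurring first (resp. last) along $p$. $X\le Y$ means every directed $s$-$t$ path meets an edge of $X$ at or before an edge of $Y$. $U^k_{\mathrm{lr}}$ is the set of $k$-tuples $[X_1,\dots,X_k]$ of elements of $\Gamma_G(s,t)$ with $X_i\le X_j$ for all $i<j$. $L^*$ is the lattice on $U^k_{\mathrm{lr}}$ with componentwise order, join $[X_i]_i\vee[Y_i]_i=[S_{\max}(X_i\cup Y_i)]_i$ and meet $[X_i]_i\wedge[Y_i]_i=[S_{\min}(X_i\cup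 Y_i)]_i$. For $C=[X_1,\dots,X_k]$, $\mu_e(C)$ is the number of indices $i$ with $e\in X_i$, and $E_{\mathrm{shr}}(C)=\{e\in E(G):\mu_e(C)\ge2\}$. *)

(* Defs.v *)
From mathcomp Require Import all_boot.
Set Implicit Arguments. Unset Strict Implicit. Unset Printing Implicit Defensive.

Section MinCuts.
Variables (V E : finType) (src tgt : E -> V) (s t : V).

Fixpoint walk_from (x : V) (p : seq E) : bool :=
  if p is e :: p' then (src e == x) && walk_from (tgt e) p' else true.

Definition st_path (p : seq E) : bool :=
  [&& walk_from s p, last s (map tgt p) == t & uniq (s :: map tgt p)].

Definition st_cut (X : {set E}) : Prop :=
  forall p, st_path p -> exists2 e, e \in p & e \in X.

Definition min_st_cut (X : {set E}) : Prop :=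
  st_cut X /\ forall Y : {set E}, st_cut Y -> #|X| <= #|Y|.

Definition cut_le (X Y : {set E}) : Prop :=
  forall p, st_path p ->
    exists x y, [/\ x \in p, y \in p, x \in X, y \in Y & index x p <= index y p].

Definition edge_disjoint_paths (P : seq (seq E)) : Prop :=
  (forall p, p \in P -> st_path p) /\
  (forall i j, i < size P -> j < size P -> i != j ->
     forall e, e \in nth [::] P i -> e \notin nth [::] P j).

Definition max_edge_disjoint_paths (P : seq (seq E)) : Prop :=
  edge_disjoint_paths P /\
  forall Q, edge_disjoint_paths Q -> size Q <= size P.

Definition first_in (A : {set E}) (p : seq E) (e : E) : bool :=
  [&& e \in p, e \in A & all (fun f => (f \in A) ==> (index e p <= index f p)) p].
Definition last_in (A : {set E}) (p : seq E) (e : E) : bool :=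
  [&& e \in p, e \in A & all (fun f => (f \in A) ==> (index f p <= index e p)) p].

Definition Smin (P : seq (seq E)) (A : {set E}) : {set E} :=
  [set e | has (fun p => first_in A p e) P].
Definition Smax (P : seq (seq E)) (A : {set E}) : {set E} :=
  [set e | has (fun p => last_in A p e) P].

Definition in_Ulr (k : nat) (C : 'I_k -> {set E}) : Prop :=
  (forall i, min_st_cut (C i)) /\ (forall i j : 'I_k, i < j -> cut_le (C i) (C j)).

Definition Ljoin (P : seq (seq E)) (k : nat) (C1 C2 : 'I_k -> {set E}) : 'I_k -> {set E} :=
  fun i => Smax P (C1 i :|: C2 i).
Definition Lmeet (P : seq (seq E)) (k : nat) (C1 C2 : 'I_k -> {set E}) : 'I_k -> {set E} :=
  fun i => Smin P (C1 i :|: C2 i).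

End MinCuts.

Section Dsum.
Variables (E : finType) (k : nat).

Definition mu (C : 'I_k -> {set E}) (e : E) : nat := #|[set i : 'I_k | e \in C i]|.

Definition Eshr (C : 'I_k -> {set E}) : {set E} := [set e | 2 <= mu C e].

Definition dsum (C : 'I_k -> {set E}) : nat := \sum_(e in Eshr C) 'C(mu C e, 2).

End Dsum.

(* Main.v *)
Require Import Defs.
From mathcomp Require Import all_boot zify.
Set Implicit Arguments. Unset Strict Implicit. Unset Printing Implicit Defensive.

Section Menger.
Variables (V E : finType) (src tgt : E -> V) (s t : V).
Hypothesis st : s != t.

Definition outd (F : {set E}) v := \sum_(e in F) ((src e == v) : nat).
Definition ind (F : {set E}) v := \sum_(e in F) ((tgt e == v) : nat).

Definition flowb F m :=
  [forall v, (v != s) ==> (v != t) ==> (outd F v == ind F v)] && (outd F s == ind F s + m).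

Lemma sum_setU1 (f : E -> nat) (e : E) (F : {set E}) : e \notin F ->
  \sum_(x in e |: F) f x = f e + \sum_(x in F) f x.
Proof. by move=> eF; rewrite big_setU1. Qed.

Lemma sum_sub (f : E -> nat) (B F : {set E}) : B \subset F ->
  \sum_(x in F) f x = \sum_(x in F :\: B) f x + \sum_(x in B) f x.
Proof.
move=> BF; rewrite (big_setID B) addnC; congr (_ + _).
by rewrite (setIidPr BF).
Qed.

Lemma sum_disjU (f : E -> nat) (A B : {set E}) : (forall x, x \in A -> x \notin B) ->
  \sum_(x in A :|: B) f x = \sum_(x in A) f x + \sum_(x in B) f x.
Proof.
move=> dAB; rewrite (big_setID A) setUK; congr (_ + _).
apply: eq_bigl => x; rewrite !inE.
case xA: (x \in A) => /=; last by [].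
idtac.
by rewrite (negPf (dAB _ xA)).
Qed.

Lemma sum_eqb_in (x : V) (R : {set V}) : \sum_(v in R) ((x == v) : nat) = (x \in R).
Proof.
case: (boolP (x \in R)) => xR.
  rewrite (bigD1 x) //= eqxx big1 // => v /andP[_ /negPf].
  by rewrite eq_sym => ->.
rewrite big1 // => v vR; case: eqP => // xv; subst; by rewrite vR in xR.
Qed.

Lemma net (F : {set E}) m (R : {set V}) : flowb F m -> s \in R -> t \notin R ->
  \sum_(e in F) ((src e \in R) && (tgt e \notin R) : nat) =
  \sum_(e in F) ((src e \notin R) && (tgt e \in R) : nat) + m.
Proof.
move=> /andP[/forallP cons /eqP fs] sR tR.
have H : \sum_(v in R) outd F v = \sum_(v in R) ind F v + m.
  rewrite (bigD1 s) //= [X in _ = X + _](bigD1 s) //= fs -addnA [m + _]addnC addnA.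
  congr (_ + _ + _); apply: eq_bigr => v /andP[vR vs].
  have vt : v != t by apply: contraNneq tR => <-.
  by move: (cons v); rewrite vs vt => /eqP.
have Eo : \sum_(v in R) outd F v = \sum_(e in F) (src e \in R : nat).
  rewrite /outd exchange_big; apply: eq_bigr => e _; exact: sum_eqb_in.
have Ei : \sum_(v in R) ind F v = \sum_(e in F) (tgt e \in R : nat).
  rewrite /ind exchange_big; apply: eq_bigr => e _; exact: sum_eqb_in.
have So : \sum_(e in F) (src e \in R : nat) =
   \sum_(e in F) ((src e \in R) && (tgt e \in R) : nat) + \sum_(e in F) ((src e \in R) && (tgt e \notin R) : nat).
  by rewrite -big_split; apply: eq_bigr => e _; case: (src e \in R); case: (tgt e \in R).
have Si : \sum_(e in F) (tgt e \in R : nat) =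
   \sum_(e in F) ((src e \in R) && (tgt e \in R) : nat) + \sum_(e in F) ((src e \notin R) && (tgt e \in R) : nat).
  by rewrite -big_split; apply: eq_bigr => e _; case: (src e \in R); case: (tgt e \in R).
lia.
Qed.


Lemma walk_src x p : walk_from src tgt x p -> forall f, f \in p -> src f \in x :: map tgt p.
Proof.
elim: p x => [|e p IH] x //= /andP[/eqP ex wp] f.
rewrite inE => /orP[/eqP -> | fp]; first by rewrite ex mem_head.
by rewrite inE (IH _ wp f fp) orbT.
Qed.

Lemma outd_U1 e (F : {set E}) v : e \notin F -> outd (e |: F) v = (src e == v) + outd F v.
Proof. by move=> eF; rewrite /outd sum_setU1. Qed.
Lemma ind_U1 e (F : {set E}) v : e \notin F -> ind (e |: F) v = (tgt e == v) + ind F v.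
Proof. by move=> eF; rewrite /ind sum_setU1. Qed.

Lemma path_deg x p : walk_from src tgt x p -> uniq (x :: map tgt p) -> forall v,
  outd [set e | e \in p] v + (last x (map tgt p) == v) = ind [set e | e \in p] v + (x == v).
Proof.
elim: p x => [|e p IH] x /=.
  by move=> _ _ v; rewrite /outd /ind !big_set0.
move=> /andP[/eqP ex wp] /andP[xn un] v.
have ep : e \notin p.
  apply/negP => /(walk_src wp); rewrite ex => /= xin; by rewrite xin in xn.
have -> : [set f | f \in e :: p] = e |: [set f | f \in p].
  by apply/setP => f; rewrite !inE.
rewrite outd_U1 ?ind_U1 ?inE //.
have := IH _ wp un v; rewrite ex; lia.
Qed.

Definition rF (F : {set E}) : rel V := fun u v => [exists e in F, (src e == u) && (tgt e == v)].

Lemma edges_of (F : {set E}) x vs : path (rF F) x vs ->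
  exists es, [/\ walk_from src tgt x es, map tgt es = vs & {subset es <= F}].
Proof.
elim: vs x => [|y vs IH] x /=; first by exists [::].
move=> /andP[/existsP[e /and3P[eF /eqP ex /eqP ey]] pv].
have [es [w m sub]] := IH _ pv.
exists (e :: es); split => /=; first by rewrite ex eqxx ey.
  by rewrite ey m.
by move=> f; rewrite inE => /orP[/eqP -> // | /sub].
Qed.

Lemma reach_path (F : {set E}) : connect (rF F) s t ->
  exists p, st_path src tgt s t p /\ {subset p <= F}.
Proof.
move=> /connectP[vs pv ->]; case/shortenP: pv => vs' pv' uv' _.
have [es [w m sub]] := edges_of pv'.
exists es; split => //; apply/and3P; split => //.
  by rewrite m.
by rewrite m.
Qed.

Lemma flow_reach (F : {set E}) m : flowb F m.+1 -> connect (rF F) s t.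
Proof.
move=> fl; set R := [set v | connect (rF F) s v].
have sR : s \in R by rewrite inE connect0.
case: (boolP (t \in R)); first by rewrite inE.
move=> tR; have := net fl sR tR.
case: (boolP [exists e in F, (src e \in R) && (tgt e \notin R)]).
  move=> /existsP[e /and3P[eF seR teR]].
  move: teR; rewrite !inE => /negP[]; apply: connect_trans (_ : connect _ _ (src e)) _.
    by move: seR; rewrite inE.
  apply: connect1; apply/existsP; exists e; by rewrite eF !eqxx.
move=> /existsPn H; rewrite big1 //; first lia.
by move=> e eF; move: (H e); rewrite eF /= => /negPf ->.
Qed.

Lemma decomp m : forall F, flowb F m -> exists Q : seq (seq E),
  [/\ size Q = m, edge_disjoint_paths src tgt s t Q & forall p, p \in Q -> {subset p <= F}].
Proof.
elim: m => [|m IH] F fl.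
  by exists [::]; split => //; split => // i j; rewrite nth_nil.
have [p [stp pF]] := reach_path (flow_reach fl).
set B := [set e | e \in p].
have BF : B \subset F by apply/subsetP => e; rewrite inE => /pF.
set F' := F :\: B.
have eo v : outd F v = outd F' v + outd B v by rewrite /outd (sum_sub _ BF).
have ei v : ind F v = ind F' v + ind B v by rewrite /ind (sum_sub _ BF).
case/and3P: (stp) => wp /eqP lp up.
have pd := path_deg wp up; rewrite lp -/B in pd.
have fl' : flowb F' m.
  case/andP: fl => /forallP cons /eqP fs; apply/andP; split.
    apply/forallP => v; apply/implyP => vns; apply/implyP => vt.
    move: (cons v); rewrite vns vt /= => /eqP.
    have := pd v; rewrite eo ei eq_sym (negPf vt) eq_sym (negPf vns).
    move=> *; apply/eqP.
lia.
  have := pd s; rewrite eo ei eqxx eq_sym (negPf st) in fs *.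
  move=> *; apply/eqP; lia.
have [Q [sQ [stQ dQ] QF]] := IH _ fl'.
have pnot e : e \in p -> forall q, q \in Q -> e \notin q.
  move=> ep q qQ; apply/negP => /(QF _ qQ); by rewrite !inE ep.
exists (p :: Q); split => //=; first by rewrite sQ.
  split.
    by move=> q; rewrite inE => /orP[/eqP -> // | /stQ].
  case=> [|i] [|j] //= Hi Hj ij e.
  - by move=> ep; apply: pnot ep _ (mem_nth _ _).
  - move=> eq; apply/negP => ep; by move: (pnot _ ep _ (mem_nth [::] Hi)); rewrite eq.
  - by apply: dQ.
move=> q; rewrite inE => /orP[/eqP -> // | qQ] e /(QF _ qQ); rewrite inE => /andP[].
by [].
Qed.

Definition res (F : {set E}) : rel V := fun u v =>
  [exists e, ((e \notin F) && (src e == u) && (tgt e == v)) ||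
             ((e \in F) && (tgt e == u) && (src e == v))].

Lemma aug_sets (F : {set E}) x vs : path (res F) x vs -> uniq (x :: vs) ->
  exists A B : {set E}, [/\ (forall e, e \in A -> e \notin F), B \subset F,
   (forall e, e \in A -> src e \in x :: vs), (forall e, e \in B -> tgt e \in x :: vs) &
   forall v, outd A v + ind B v + (last x vs == v) = ind A v + outd B v + (x == v)].
Proof.
elim: vs x => [|y vs IH] x /=.
  move=> _ _; exists set0, set0; split => //.
  - by move=> y; rewrite inE.
  - by rewrite sub0set.
  - by move=> e; rewrite inE.
  - by move=> e; rewrite inE.
  by move=> v; rewrite /outd /ind !big_set0.
move=> /andP[/existsP[e He] pv] /andP[xn un].
have [A [B [dA BF sA tB H]]] := IH _ pv un.
case/orP: He => /andP[/andP[eF /eqP ex] /eqP ey].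
  have eA : e \notin A by apply/negP => /sA; rewrite ex => xin; by rewrite xin in xn.
  exists (e |: A), B; split => //.
  - by move=> f; rewrite in_setU1 => /orP[/eqP -> | /dA].
  - move=> f; rewrite in_setU1 => /orP[/eqP -> | /sA fi]; first by rewrite ex mem_head.
    by rewrite inE fi orbT.
  - by move=> f /tB fi; rewrite inE fi orbT.
  move=> v; rewrite outd_U1 // ind_U1 // ex ey; have := H v; lia.
have eB : e \notin B by apply/negP => /tB; rewrite ex => xin; by rewrite xin in xn.
exists A, (e |: B); split => //.
- by rewrite subUset sub1set eF BF.
- by move=> f /sA fi; rewrite inE fi orbT.
- move=> f; rewrite in_setU1 => /orP[/eqP -> | /tB fi]; first by rewrite ex mem_head.
  by rewrite inE fi orbT.
move=> v; rewrite outd_U1 // ind_U1 // ex ey; have := H v; lia.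
Qed.

Lemma cross (R : {set V}) (X : {set E}) x p :
  (forall e, ((src e \in R) && (tgt e \notin R)) -> e \in X) ->
  walk_from src tgt x p -> x \in R -> last x (map tgt p) \notin R ->
  exists2 e, e \in p & e \in X.
Proof.
move=> HX; elim: p x => [|e p IH] x /=; first by move=> _ ->.
move=> /andP[/eqP ex wp] xR lR.
case: (boolP (tgt e \in R)) => teR.
  by have [f fp fX] := IH _ wp teR lR; exists f => //; rewrite inE fp orbT.
by exists e; rewrite ?mem_head // HX // ex xR.
Qed.

Lemma card_sub_sum (X F : {set E}) : X \subset F -> \sum_(e in F) ((e \in X) : nat) = #|X|.
Proof.
move=> XF; rewrite (sum_sub _ XF) big1 ?add0n.
  by rewrite -sum1_card; apply: eq_bigr => e ->.
by move=> e; rewrite inE => /andP[/negPf ->].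
Qed.

Lemma outd_le F v : outd F v <= #|E|.
Proof.
apply: (@leq_trans (\sum_(e in F) 1)); first by apply: leq_sum => e _; case: (_ == _).
by rewrite sum1_card max_card.
Qed.

Lemma mincut_le (P : seq (seq E)) : max_edge_disjoint_paths src tgt s t P ->
  forall X, min_st_cut src tgt s t X -> #|X| <= size P.
Proof.
move=> [_ maxP] X0 [_ minX0].
have exm : exists m, [exists F, flowb F m].
  exists 0; apply/existsP; exists set0; rewrite /flowb /outd /ind !big_set0 eqxx andbT.
  by apply/forallP => v; rewrite !big_set0; case: (_ != _); case: (_ != _).
have bnd : forall m, [exists F, flowb F m] -> m <= #|E|.
  move=> m /existsP[F /andP[_ /eqP fs]]; have := outd_le F s; lia.
case: (ex_maxnP exm bnd) => m /existsP[F fl] mx.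
have Pm : m <= size P.
  by have [Q [<- dQ _]] := decomp fl; apply: maxP.
set R := [set v | connect (res F) s v].
have sR : s \in R by rewrite inE connect0.
have tR : t \notin R.
  apply/negP; rewrite inE => /connectP[vs pv lv].
  move: lv; case/shortenP: pv => vs' pv' uv' _ lv.
  have [A [B [dA BF sA tB H]]] := aug_sets pv' uv'.
  set F' := (F :\: B) :|: A.
  have dd : forall x, x \in F :\: B -> x \notin A.
    by move=> x; rewrite inE => /andP[_ xF]; apply/negP => /dA; rewrite xF.
  have eo v : outd F' v + outd B v = outd F v + outd A v.
    by rewrite /outd (sum_disjU _ dd) (sum_sub _ BF); lia.
  have ei v : ind F' v + ind B v = ind F v + ind A v.
    by rewrite /ind (sum_disjU _ dd) (sum_sub _ BF); lia.
  have : flowb F' m.+1.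
    case/andP: fl => /forallP cons /eqP fs; apply/andP; split.
      apply/forallP => v; apply/implyP => vns; apply/implyP => vt.
      move: (cons v); rewrite vns vt /= => /eqP.
      have := H v; have := eo v; have := ei v.
      rewrite -lv eq_sym (negPf vt) eq_sym (negPf vns).
      move=> *; apply/eqP; lia.
    have := H s; have := eo s; have := ei s.
    rewrite -lv eqxx eq_sym (negPf st).
    move=> *; apply/eqP; lia.
  move=> fl'; have := mx m.+1 (introT existsP (ex_intro _ F' fl')); lia.
set X := [set e | (src e \in R) && (tgt e \notin R)].
have XF : X \subset F.
  apply/subsetP => e; rewrite !inE => /andP[seR]; apply: contraR => eF.
  apply: connect_trans seR _; apply: connect1; apply/existsP; exists e.
  by rewrite eF !eqxx.
have cX : #|X| = m.
  have Z : \sum_(e in F) ((src e \notin R) && (tgt e \in R) : nat) = 0.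
    apply: big1 => e eF; apply/eqP; rewrite eqb0.
    apply/negP => /andP[seR teR]; move: seR; rewrite inE; apply/negP; rewrite negbK.
    apply: connect_trans (_ : connect _ _ (tgt e)) _; first by move: teR; rewrite inE.
    apply: connect1; apply/existsP; exists e; by rewrite eF !eqxx orbT.
  have := net fl sR tR; rewrite Z add0n -(card_sub_sum XF) => <-.
  by apply: eq_bigr => e _; rewrite inE.
have cutX : st_cut src tgt s t X.
  move=> p /and3P[wp /eqP lp _]; apply: (cross (R := R)) wp sR _.
    by move=> e He; rewrite inE.
  by rewrite lp.
by apply: leq_trans (minX0 _ cutX) _; rewrite cX.
Qed.

Lemma disj_in (P : seq (seq E)) : edge_disjoint_paths src tgt s t P ->
  forall p q e, p \in P -> q \in P -> e \in p -> e \in q -> p = q.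
Proof.
move=> [_ dP] p q e pP qP ep eq.
have := dP (index p P) (index q P); rewrite !index_mem pP qP !nth_index // => H.
case: (eqVneq (index p P) (index q P)) => [ipq | ipq].
  by rewrite -(nth_index [::] pP) -(nth_index [::] qP) ipq.
by move: (H isT isT ipq e ep); rewrite eq.
Qed.

Lemma uniq_hit (P : seq (seq E)) X p : max_edge_disjoint_paths src tgt s t P ->
  min_st_cut src tgt s t X -> p \in P ->
  exists x, [/\ x \in p, x \in X & forall f, f \in p -> f \in X -> f = x].
Proof.
move=> mP mX pP; have [[stP dP] _] := mP; have [cX _] := mX.
have [x xp xX] := cX _ (stP _ pP).
exists x; split => // f fp fX; apply/eqP; apply: contraT => fx.
have le := mincut_le mP mX.
set n := size P.
pose g (j : 'I_n) := odflt x [pick e in X | e \in nth [::] P j].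
have gP j : g j \in X /\ g j \in nth [::] P j.
  rewrite /g; case: pickP => [e /andP[eX ej] | H] //=.
  have [e ej eX] := cX _ (stP _ (mem_nth [::] (ltn_ord j))).
  by move: (H e); rewrite eX ej.
have gi : injective g.
  move=> j1 j2 gj; apply/eqP; apply: contraT => j12.
  have [_ g1] := gP j1; have [_ g2] := gP j2.
  by move: (dP j1 j2 (ltn_ord j1) (ltn_ord j2) j12 _ g1); rewrite gj g2.
have ip : index p P < n by rewrite index_mem.
set i0 : 'I_n := Ordinal ip.
set z := if g i0 == x then f else x.
have zX : z \in X by rewrite /z; case: ifP.
have zp : z \in p by rewrite /z; case: ifP.
have zg : z != g i0 by rewrite /z; case: ifP => [/eqP -> // | /negbT]; rewrite eq_sym.
have zn : z \notin [set g j | j in 'I_n].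
  apply/imsetP => [[j _ zj]].
  have zi0 : z \in nth [::] P i0 by rewrite /= nth_index.
  case: (eqVneq i0 j) => [ij | ij].
    by move: zg; rewrite zj ij eqxx.
  have [_ gj] := gP j.
  by move: (dP i0 j (ltn_ord i0) (ltn_ord j) ij _ zi0); rewrite zj gj.
have : #|z |: [set g j | j in 'I_n]| <= #|X|.
  apply: subset_leq_card; apply/subsetP => e; rewrite in_setU1 => /orP[/eqP -> //|].
  by move=> /imsetP[j _ ->]; have [] := gP j.
rewrite cardsU1 zn card_imset // card_ord; have := le; rewrite -/n; lia.
Qed.
End Menger.

Lemma idx_eq (E : eqType) (p : seq E) x e : e \in p -> x \in p -> (index e p == index x p) = (e == x).
Proof.
move=> ep xp; apply/eqP/eqP => [h|-> //].
by rewrite -(nth_index x ep) h nth_index.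
Qed.

Lemma memX (E : finType) (p : seq E) e x (X : {set E}) : e \in p -> x \in p -> x \in X ->
  (forall f, f \in p -> f \in X -> f = x) -> (e \in X) = (index e p == index x p).
Proof.
move=> ep xp xX H; rewrite idx_eq //; apply/idP/eqP => [eX | ->] //; exact: H.
Qed.

Lemma memSmax (E : finType) (P : seq (seq E)) p e x y (X Y : {set E}) :
  p \in P -> e \in p -> (forall q, q \in P -> e \in q -> q = p) ->
  x \in p -> x \in X -> (forall f, f \in p -> f \in X -> f = x) ->
  y \in p -> y \in Y -> (forall f, f \in p -> f \in Y -> f = y) ->
  (e \in Smax P (X :|: Y)) = (index e p == maxn (index x p) (index y p)).
Proof.
move=> pP ep uq xp xX hx yp yY hy; rewrite inE; apply/hasP/eqP.
  move=> [q qP /and3P[eq eA /allP al]]; have qp := uq _ qP eq; subst q.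
  have := al x xp; rewrite inE xX /= => lx.
  have := al y yp; rewrite inE yY orbT /= => ly.
  move: eA; rewrite inE => /orP[/(hx _ ep) ee | /(hy _ ep) ee]; subst e; lia.
move=> H; exists p => //; apply/and3P; split => //.
  rewrite inE; case: (leqP (index y p) (index x p)) => c.
    have : index e p == index x p by rewrite H; apply/eqP; lia.
    by rewrite idx_eq // => /eqP ->; rewrite xX.
  have : index e p == index y p by rewrite H; apply/eqP; lia.
  by rewrite idx_eq // => /eqP ->; rewrite yY orbT.
apply/allP => f fp; apply/implyP; rewrite inE => /orP[/(hx _ fp) -> | /(hy _ fp) ->]; lia.
Qed.

Lemma memSmin (E : finType) (P : seq (seq E)) p e x y (X Y : {set E}) :
  p \in P -> e \in p -> (forall q, q \in P -> e \in q -> q = p) ->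
  x \in p -> x \in X -> (forall f, f \in p -> f \in X -> f = x) ->
  y \in p -> y \in Y -> (forall f, f \in p -> f \in Y -> f = y) ->
  (e \in Smin P (X :|: Y)) = (index e p == minn (index x p) (index y p)).
Proof.
move=> pP ep uq xp xX hx yp yY hy; rewrite inE; apply/hasP/eqP.
  move=> [q qP /and3P[eq eA /allP al]]; have qp := uq _ qP eq; subst q.
  have := al x xp; rewrite inE xX /= => lx.
  have := al y yp; rewrite inE yY orbT /= => ly.
  move: eA; rewrite inE => /orP[/(hx _ ep) ee | /(hy _ ep) ee]; subst e; lia.
move=> H; exists p => //; apply/and3P; split => //.
  rewrite inE; case: (leqP (index x p) (index y p)) => c.
    have : index e p == index x p by rewrite H; apply/eqP; lia.
    by rewrite idx_eq // => /eqP ->; rewrite xX.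
  have : index e p == index y p by rewrite H; apply/eqP; lia.
  by rewrite idx_eq // => /eqP ->; rewrite yY orbT.
apply/allP => f fp; apply/implyP; rewrite inE => /orP[/(hx _ fp) -> | /(hy _ fp) ->]; lia.
Qed.

Lemma binom_pairs (q : nat -> bool) n :
  'C(\sum_(i < n) q i, 2) = \sum_(j < n) \sum_(i < j) (q i && q j).
Proof.
elim: n => [|n IH]; first by rewrite !big_ord0.
rewrite !big_ord_recr /= -IH; case: (q n) => /=.
  rewrite addn1 binS bin1; congr (_ + _); apply: eq_bigr => i _; by rewrite andbT.
by rewrite addn0 [X in _ = _ + X]big1 ?addn0 // => i _; rewrite andbF.
Qed.

Lemma arith ai aj bi bj q : ai <= aj -> bi <= bj ->
  ((q == maxn ai bi) && (q == maxn aj bj)) + ((q == minn ai bi) && (q == minn aj bj))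
  <= ((q == ai) && (q == aj)) + ((q == bi) && (q == bj)).
Proof.
move=> h1 h2; rewrite /maxn /minn.
case: ltnP => h3; case: ltnP => h4;
case: (q =P ai) => ?; case: (q =P aj) => ?; case: (q =P bi) => ?; case: (q =P bj) => ? //=; lia.
Qed.

Lemma pair_ineq (V E : finType) (src tgt : E -> V) (s t : V) k (P : seq (seq E))
  (C1 C2 : 'I_k -> {set E}) (i j : 'I_k) e : s != t ->
  max_edge_disjoint_paths src tgt s t P ->
  in_Ulr src tgt s t C1 -> in_Ulr src tgt s t C2 -> i < j ->
  ((e \in Ljoin P C1 C2 i) && (e \in Ljoin P C1 C2 j)) +
  ((e \in Lmeet P C1 C2 i) && (e \in Lmeet P C1 C2 j)) <=
  ((e \in C1 i) && (e \in C1 j)) + ((e \in C2 i) && (e \in C2 j)).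
Proof.
move=> st mP [m1 o1] [m2 o2] ij; rewrite /Ljoin /Lmeet.
case: (boolP (has (fun q => e \in q) P)) => [/hasP[p pP ep] | nh]; last first.
  have nS A : (e \in Smax P A) = false.
    apply/negbTE; rewrite inE; apply/hasPn => q qP; apply/negP => /and3P[eq _ _].
    by move/hasPn: nh => /(_ q qP); rewrite eq.
  have nM A : (e \in Smin P A) = false.
    apply/negbTE; rewrite inE; apply/hasPn => q qP; apply/negP => /and3P[eq _ _].
    by move/hasPn: nh => /(_ q qP); rewrite eq.
  by rewrite !nS !nM.
have uq : forall q, q \in P -> e \in q -> q = p.
  by move=> q qP eq; apply: (disj_in (proj1 mP) qP pP eq ep).
have stp : st_path src tgt s t p by apply: (proj1 (proj1 mP)).
have [x1 [x1p x1X h1]] := uniq_hit st mP (m1 i) pP.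
have [x2 [x2p x2X h2]] := uniq_hit st mP (m1 j) pP.
have [y1 [y1p y1X g1]] := uniq_hit st mP (m2 i) pP.
have [y2 [y2p y2X g2]] := uniq_hit st mP (m2 j) pP.
have le1 : index x1 p <= index x2 p.
  have [a [b [ap bp aX bX ab]]] := o1 i j ij p stp.
  by rewrite -(h1 _ ap aX) -(h2 _ bp bX).
have le2 : index y1 p <= index y2 p.
  have [a [b [ap bp aX bX ab]]] := o2 i j ij p stp.
  by rewrite -(g1 _ ap aX) -(g2 _ bp bX).
rewrite (memSmax pP ep uq x1p x1X h1 y1p y1X g1) (memSmax pP ep uq x2p x2X h2 y2p y2X g2).
rewrite (memSmin pP ep uq x1p x1X h1 y1p y1X g1) (memSmin pP ep uq x2p x2X h2 y2p y2X g2).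
rewrite (memX ep x1p x1X h1) (memX ep x2p x2X h2) (memX ep y1p y1X g1) (memX ep y2p y2X g2).
exact: arith.
Qed.

Definition qC (E : finType) k (C : 'I_k -> {set E}) e (n : nat) :=
  [exists o : 'I_k, (val o == n) && (e \in C o)].

Lemma qC_val (E : finType) k (C : 'I_k -> {set E}) e (i : 'I_k) : qC C e i = (e \in C i).
Proof.
apply/existsP/idP => [[o /andP[/eqP oi eo]] | ei]; last by exists i; rewrite eqxx.
have oi' : o = i by apply: val_inj.
by rewrite -oi'.
Qed.

Lemma dsum_pairs (E : finType) k (C : 'I_k -> {set E}) :
  dsum C = \sum_e \sum_(j < k) \sum_(i < j) (qC C e i && qC C e j).
Proof.
rewrite /dsum big_mkcond /=; apply: eq_bigr => e _.
have hm : mu C e = \sum_(i < k) qC C e i.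
  rewrite /mu -sum1_card big_mkcond /=; apply: eq_bigr => i _.
  by rewrite inE qC_val; case: (e \in C i).
rewrite inE hm -binom_pairs; case: ifP => // /negbT; rewrite -ltnNge => h.
by rewrite bin_small.
Qed.

Theorem theorem6 (V E : finType) (src tgt : E -> V) (s t : V) (k : nat)
  (P : seq (seq E)) (C1 C2 : 'I_k -> {set E}) :
  1 <= k ->
  max_edge_disjoint_paths src tgt s t P ->
  in_Ulr src tgt s t C1 -> in_Ulr src tgt s t C2 ->
  dsum (Ljoin P C1 C2) + dsum (Lmeet P C1 C2) <= dsum C1 + dsum C2.
Proof.
move=> k1 mP U1 U2.
have st : s != t.
  apply/negP => /eqP est; have [m1 _] := U1; have [cX _] := m1 (Ordinal k1).
  have sp : st_path src tgt s t [::] by rewrite /st_path /= est eqxx.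
  by have [e] := cX _ sp; rewrite in_nil.
rewrite !dsum_pairs -!big_split /=; apply: leq_sum => e _.
rewrite -!big_split /=; apply: leq_sum => j _.
rewrite -!big_split /=; apply: leq_sum => i _.
have ik : i < k by apply: ltn_trans (ltn_ord i) (ltn_ord j).
have -> : nat_of_ord i = nat_of_ord (Ordinal ik) by [].
rewrite !qC_val.
exact: (pair_ineq (i := Ordinal ik) (j := j) e st mP U1 U2 (ltn_ord i)).
Qed.
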